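(* Let $A\in\mathbb{R}^{n\times n}$ be symmetric positive-semidefinite, $b\in\mathbb{R}^n$, $\alpha\in\mathbb{R}$, $g:\mathbb{R}^n\to(-\infty,\infty]$ proper, lower semicontinuous and convex, and $\gamma>0$ such that $I-\gamma A$ is positive-definite. Set $Q:=(I-\gamma A)^{-1}$, $c:=\gamma Qb$, $P:=Q-I$, $\psi(u):=\frac12\langle Pu,u\rangle+\langle c,u\rangle+\gamma e_\gamma g(u)$ and $\varphi(x):=\frac12\langle Ax,x\rangle+\langle b,x\rangle+\alpha+g(x)$. Then the following are equivalent for $\bar x\in\mathbb{R}^n$: (i) $\bar x$ is an optimal solution of minimizing $\varphi$ over $\mathbb{R}^n$; (ii) $\bar x=Q\bar u+c$ for some optimal solution $\bar u$ of minimizing $\psi$ over $\mathbb{R}^n$.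
   Context: Moreau envelope: $e_\gamma g(x):=\inf_y\{g(y)+\frac1{2\gamma}\|y-x\|^2\}$. *)

(* Defs.v *)
From HB Require Import structures.
From mathcomp Require Import all_boot all_order all_algebra.
From mathcomp Require Import all_classical all_reals all_analysis.
Set Implicit Arguments. Unset Strict Implicit. Unset Printing Implicit Defensive.
Import Order.TTheory GRing.Theory Num.Theory.
Import numFieldNormedType.Exports.
Local Open Scope classical_set_scope.
Local Open Scope ring_scope.

Definition dotv {R : realType} {n : nat} (u v : 'cV[R]_n) : R := (u^T *m v) 0 0.

Definition symmetricmx {R : realType} {n : nat} (A : 'M[R]_n) : Prop := A^T = A.

Definition psdmx {R : realType} {n : nat} (A : 'M[R]_n) : Prop :=
  symmetricmx A /\ forall x : 'cV[R]_n, 0 <= dotv (A *m x) x.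

Definition pdmx {R : realType} {n : nat} (A : 'M[R]_n) : Prop :=
  symmetricmx A /\ forall x : 'cV[R]_n, x != 0 -> 0 < dotv (A *m x) x.

Definition proper_fun {R : realType} {n : nat} (g : 'cV[R]_n -> \bar R) : Prop :=
  (forall x, g x != -oo%E) /\ exists x, g x != +oo%E.

(* convex extended-real valued function (with no -oo values, + is unambiguous) *)
Definition convex_efun {R : realType} {n : nat} (g : 'cV[R]_n -> \bar R) : Prop :=
  forall (x y : 'cV[R]_n) (t : R), 0 <= t <= 1 ->
    (g ((t *: x + (1 - t) *: y)%R) <= t%:E * g x + (1 - t)%:E * g y)%E.

Definition moreau_env {R : realType} {n : nat} (gamma : R) (g : 'cV[R]_n -> \bar R)
  (x : 'cV[R]_n) : \bar R :=
  ereal_inf [set (g y + ((2 * gamma)^-1 * dotv (y - x) (y - x))%:E)%E | y in [set: 'cV[R]_n]]%classic.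

Definition is_minimizer {R : realType} {n : nat} (f : 'cV[R]_n -> \bar R) (xbar : 'cV[R]_n) : Prop :=
  forall x, (f xbar <= f x)%E.

(* Main.v *)
From Pilot Require Import Defs.
From HB Require Import structures.
From mathcomp Require Import all_boot all_order all_algebra.
From mathcomp Require Import all_classical all_reals all_analysis.
From mathcomp Require Import ring lra.
Import Order.TTheory GRing.Theory Num.Theory.
Import numFieldNormedType.Exports.
Local Open Scope classical_set_scope.
Local Open Scope ring_scope.

Module PilotAux.
Set Implicit Arguments. Unset Strict Implicit.


Section Dot.
Variables (R : realType) (n : nat).
Implicit Types (u v w : 'cV[R]_n) (B : 'M[R]_n).

Lemma dotvE u v : dotv u v = \sum_i u i 0 * v i 0.
Proof. by rewrite /dotv mxE; apply: eq_bigr => i _; rewrite mxE. Qed.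

Lemma dotvC u v : dotv u v = dotv v u.
Proof. by rewrite !dotvE; apply: eq_bigr => i _; rewrite mulrC. Qed.

Lemma dotvDl u v w : dotv (u + v) w = dotv u w + dotv v w.
Proof. by rewrite /dotv linearD /= mulmxDl mxE. Qed.
Lemma dotvDr u v w : dotv w (u + v) = dotv w u + dotv w v.
Proof. by rewrite /dotv mulmxDr mxE. Qed.
Lemma dotvZl a u v : dotv (a *: u) v = a * dotv u v.
Proof. by rewrite /dotv linearZ /= -scalemxAl mxE. Qed.
Lemma dotvZr a u v : dotv u (a *: v) = a * dotv u v.
Proof. by rewrite /dotv -scalemxAr mxE. Qed.
Lemma dotvNl u v : dotv (- u) v = - dotv u v.
Proof. by rewrite -scaleN1r dotvZl mulN1r. Qed.
Lemma dotvNr u v : dotv u (- v) = - dotv u v.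
Proof. by rewrite -scaleN1r dotvZr mulN1r. Qed.
Lemma dotvBl u v w : dotv (u - v) w = dotv u w - dotv v w.
Proof. by rewrite dotvDl dotvNl. Qed.
Lemma dotvBr u v w : dotv w (u - v) = dotv w u - dotv w v.
Proof. by rewrite dotvDr dotvNr. Qed.
Lemma dotv0l v : dotv 0 v = 0.
Proof. by rewrite -(scale0r 0) dotvZl mul0r. Qed.
Lemma dotvM B u v : dotv (B *m u) v = dotv u (B^T *m v).
Proof. by rewrite /dotv trmx_mul mulmxA. Qed.
Lemma dotvMsym B u v : B^T = B -> dotv (B *m u) v = dotv u (B *m v).
Proof. by move=> h; rewrite dotvM h. Qed.
Lemma dotvvE u : dotv u u = \sum_i (u i 0)^+2.
Proof. by rewrite dotvE; apply: eq_bigr => i _; rewrite expr2. Qed.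
Lemma dotvv_ge0 u : 0 <= dotv u u.
Proof. by rewrite dotvvE; apply: sumr_ge0 => i _; rewrite sqr_ge0. Qed.
Lemma dotv_delta u (i : 'I_n) : dotv u (delta_mx i 0) = u i 0.
Proof.
rewrite dotvE (bigD1 i) //= mxE !eqxx mulr1 big1 ?addr0 // => j ji.
by rewrite mxE (negbTE ji) mulr0.
Qed.
End Dot.


Section Mx.
Variables (R : realType) (n : nat).
Implicit Types (u v w x : 'cV[R]_n) (B : 'M[R]_n).

Lemma psd_of_pd B : pdmx B -> forall x, 0 <= dotv (B *m x) x.
Proof.
move=> [_ h] x; have [->|/h/ltW//] := eqVneq x 0.
by rewrite mulmx0 dotv0l.
Qed.

Lemma pd_unit B : pdmx B -> B \in unitmx.
Proof.
move=> [hs h]; rewrite -row_free_unit -kermx_eq0; apply/eqP/row_matrixP => i.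
rewrite row0; set r := row i _.
have : (r <= kermx B)%MS by apply: row_sub.
move/sub_kermxP => hr.
have hx : B *m r^T = 0 by rewrite -{1}hs -trmx_mul hr trmx0.
have [/(congr1 trmx)|/h] := eqVneq r^T 0; first by rewrite trmxK trmx0.
by rewrite hx dotv0l ltxx.
Qed.

Lemma CS B w v : B^T = B -> (forall x, 0 <= dotv (B *m x) x) ->
  (dotv (B *m w) v)^+2 <= dotv (B *m w) w * dotv (B *m v) v.
Proof.
move=> hs hp.
set a := dotv (B *m w) w; set bb := dotv (B *m w) v; set cc := dotv (B *m v) v.
have key t : 0 <= a - 2 * t * bb + t ^+ 2 * cc.
  have := hp (w - t *: v).
  rewrite mulmxBr -scalemxAr dotvBl !dotvBr !dotvZl !dotvZr.
  have -> : dotv (B *m v) w = bb by rewrite dotvMsym // dotvC.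
  rewrite -/a -/bb -/cc; congr (0 <= _); rewrite expr2; ring.
have cc0 : 0 <= cc by apply: hp.
have [ccp|] := ltrP 0 cc.
  have := key (bb / cc).
  have e : bb / cc * cc = bb by rewrite mulfVK // gt_eqF.
  move=> k; have : 0 <= (a - 2 * (bb / cc) * bb + (bb / cc) ^+ 2 * cc) * cc.
    by rewrite mulr_ge0 // ltW.
  rewrite expr2 -[X in X * cc]/(_) => h2.
  have -> : bb ^+ 2 = (bb / cc * cc) ^+ 2 by rewrite e.
  set t := bb / cc in h2 e *; rewrite expr2.
  nra.
move=> hc; have c0 : cc = 0 by apply/eqP; rewrite eq_le hc cc0.
rewrite c0 mulr0; have [->|bn0] := eqVneq bb 0; first by rewrite expr2 mulr0.
have := key ((a + 1) / (2 * bb)); rewrite c0 mulr0 addr0.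
have -> : 2 * ((a + 1) / (2 * bb)) * bb = a + 1.
  by field; rewrite bn0.
lra.
Qed.
End Mx.


Section Ident.
Variables (R : realType) (n : nat) (A M Q P : 'M[R]_n) (b c : 'cV[R]_n) (gamma : R).
Hypothesis hA : A^T = A.
Hypothesis hMdef : M = 1%:M - gamma *: A.
Hypothesis hM : M^T = M.
Hypothesis hQ : Q^T = Q.
Hypothesis MQ : M *m Q = 1%:M.
Hypothesis hc : c = gamma *: (Q *m b).
Hypothesis hP : P = Q - 1%:M.
Implicit Types (u y : 'cV[R]_n).

Lemma Mc : M *m c = gamma *: b.
Proof. by rewrite hc -scalemxAr mulmxA MQ mul1mx. Qed.
Lemma My y : M *m y = y - gamma *: (A *m y).
Proof. by rewrite hMdef mulmxBl mul1mx -scalemxAl. Qed.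

Lemma ident u y :
  2^-1 * dotv (P *m u) u + dotv c u + 2^-1 * dotv (y - u) (y - u) =
  2^-1 * dotv (M *m (Q *m u + c - y)) (Q *m u + c - y)
  + gamma * (2^-1 * dotv (A *m y) y + dotv b y) - gamma / 2 * dotv c b.
Proof.
pose z := Q *m u + c - y.
have -> : Q *m u + c - y = z by [].
have Mz : M *m z = u + gamma *: b - M *m y.
  by rewrite /z mulmxBr mulmxDr mulmxA MQ mul1mx Mc.
have e1 : dotv (M *m z) z = dotv u z + gamma * dotv b z - dotv y (M *m z).
  by rewrite {1}Mz !dotvBl dotvDl dotvZl dotvMsym // hM.
have e2 : dotv y (M *m z) = dotv y u + gamma * dotv y b - dotv (M *m y) y.
  by rewrite Mz !dotvBr dotvDr dotvZr (dotvC y (M *m y)).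
have e3 : dotv (M *m y) y = dotv y y - gamma * dotv (A *m y) y.
  by rewrite My dotvBl dotvZl.
have e4 : dotv u z = dotv (Q *m u) u + dotv c u - dotv y u.
  by rewrite /z !dotvBr dotvDr (dotvC u) (dotvC u c) (dotvC u y).
have e5 : gamma * dotv b z = dotv c u + gamma * dotv c b - gamma * dotv y b.
  rewrite /z !dotvBr dotvDr hc dotvZl (dotvC b (gamma *: _)) dotvZl.
  by rewrite -(dotvMsym _ _ hQ) (dotvC b y) mulrBr mulrDr.
have e6 : dotv (P *m u) u = dotv (Q *m u) u - dotv u u.
  by rewrite hP mulmxBl mul1mx dotvBl.
have e7 : dotv (y - u) (y - u) = dotv y y - 2 * dotv y u + dotv u u.
  rewrite !dotvBl !dotvBr (dotvC u y); ring.
rewrite e1 e2 e3 e4 e5 e6 e7 (dotvC b y); by field.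
Qed.
End Ident.


Section Env.
Variables (R : realType) (n : nat) (g : 'cV[R]_n -> \bar R) (gamma : R).
Hypothesis gNy : forall x, g x != -oo%E.
Hypothesis gam0 : 0 < gamma.
Let g0 : (0 <= gamma%:E)%E. Proof. by rewrite lee_fin ltW. Qed.
Implicit Types (u y : 'cV[R]_n).

Lemma F1raw (L : R) u y :
  (L%:E + gamma%:E * moreau_env gamma g u <=
   (L + 2^-1 * dotv (y - u) (y - u))%:E + gamma%:E * g y)%E.
Proof.
have := gNy y; case E: (g y) => [r| |] // _; last first.
  by rewrite mulry gtr0_sg // mul1e addey // leey.
have h : (moreau_env gamma g u <= (r + (2 * gamma)^-1 * dotv (y - u) (y - u))%:E)%E.
  by apply: ereal_inf_lbound; exists y => //; rewrite E.
have := lee_wpmul2l g0 h; rewrite -EFinM => h2.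
apply: le_trans (leeD2l _ h2) _; rewrite -!EFinD lee_fin.
rewrite invfM mulrDr; have -> : gamma * (2^-1 * gamma^-1 * dotv (y - u) (y - u)) = 2^-1 * dotv (y - u) (y - u).
  by field; rewrite gt_eqF.
lra.
Qed.

Lemma F2raw (L m : R) u :
  (forall y, (m%:E <= (L + 2^-1 * dotv (y - u) (y - u))%:E + gamma%:E * g y)%E) ->
  (m%:E <= L%:E + gamma%:E * moreau_env gamma g u)%E.
Proof.
move=> hy.
have h : (((m - L) / gamma)%:E <= moreau_env gamma g u)%E.
  apply/ereal_infP => _ [y _ <-].
  have := hy y; have := gNy y; case: (g y) => [r| |] //= _; last by rewrite leey.
  rewrite -EFinM -!EFinD !lee_fin => h1.
  rewrite ler_pdivrMr // mulrDl.
  have -> : (2 * gamma)^-1 * dotv (y - u) (y - u) * gamma = 2^-1 * dotv (y - u) (y - u).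
    by field; rewrite gt_eqF.
  lra.
have := lee_wpmul2l g0 h; rewrite -EFinM => h2.
apply: le_trans (leeD2l L%:E h2); rewrite -EFinD lee_fin.
have -> : gamma * ((m - L) / gamma) = m - L by field; rewrite gt_eqF.
lra.
Qed.
End Env.


Lemma nbhs_cV (R : realType) n (x : 'cV[R]_n) (V : set 'cV[R]_n) : nbhs x V ->
  exists2 r : R, 0 < r & forall z : 'cV[R]_n, (forall i : 'I_n, `|x i 0 - z i 0| < r) -> V z.
Proof.
move/nbhs_ballP => [r r0 hr]; exists r => // z hz; apply: hr; split => // i j.
by rewrite (ord1 j); exact: hz.
Qed.

Lemma le_sum_abs (R : realType) n (f : 'I_n -> R) i : `|f i| <= \sum_j `|f j|.
Proof.
rewrite (bigD1 i) //= lerDl; apply: sumr_ge0 => j _; exact: normr_ge0.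
Qed.

Section EnvLB.
Variables (R : realType) (n : nat) (g : 'cV[R]_n -> \bar R) (gamma : R).
Hypothesis gNy : forall x, g x != -oo%E.
Hypothesis gam0 : 0 < gamma.
Hypothesis gconv : convex_efun g.
Hypothesis glsc : lower_semicontinuous g.

Lemma grow_lb x0 G0 : g x0 = G0%:E ->
  exists2 r : R, 0 < r & forall y Gy, g y = Gy%:E ->
    G0 - 1 - (\sum_i `|y i 0 - x0 i 0|) / r <= Gy.
Proof.
move=> gx0.
have : ((G0 - 1)%:E < g x0)%E by rewrite gx0 lte_fin; lra.
move/glsc => [V /nbhs_cV [r r0 hr] hV].
exists r => // y Gy gy.
set T := \sum_i `|y i 0 - x0 i 0|.
have T0 : 0 <= T by apply: sumr_ge0 => i _; exact: normr_ge0.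
set t := r / (r + T).
have rT0 : 0 < r + T by lra.
have t0 : 0 < t by rewrite divr_gt0.
have t1 : t <= 1 by rewrite ler_pdivrMr // mul1r; lra.
have tT : t * T < r.
  rewrite /t mulrAC ltr_pdivrMr // mulrDr; nra.
set z := t *: y + (1 - t) *: x0.
have hz : ((G0 - 1)%:E < g z)%E.
  apply: hV; apply: hr => i; rewrite /z !mxE.
  have -> : x0 i 0 - (t * y i 0 + (1 - t) * x0 i 0) = - (t * (y i 0 - x0 i 0)) by ring.
  rewrite normrN normrM (gtr0_norm t0).
  apply: le_lt_trans tT; rewrite ler_pM2l //; exact: le_sum_abs.
have hc := gconv y x0 (_ : 0 <= t <= 1).
have {hc} := hc ltac:(by rewrite (ltW t0) t1).
rewrite -/z gy gx0 -!EFinM -EFinD => hc.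
have := lt_le_trans hz hc; rewrite lte_fin => h.
have e : G0 - 1 - T / r = G0 - t^-1.
  by rewrite /t invf_div; field; rewrite gt_eqF.
rewrite e; have : t * (G0 - t^-1) < t * Gy.
  rewrite mulrBr mulfV ?gt_eqF //; lra.
by rewrite ltr_pM2l // => /ltW.
Qed.

Lemma env_lb x0 G0 u : g x0 = G0%:E ->
  exists m : R, forall y,
    (m%:E <= (2^-1 * dotv (y - u) (y - u))%:E + gamma%:E * g y)%E.
Proof.
move=> /grow_lb [r r0 hr].
set k := gamma / r.
exists (gamma * (G0 - 1) - k * (\sum_i `|u i 0 - x0 i 0|) - (k ^+ 2 / 2) *+ n).
move=> y; have := gNy y; case E: (g y) => [Gy| |] // _; last first.
  by rewrite mulry gtr0_sg // mul1e addey // leey.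
have := hr _ _ E => hG.
rewrite -EFinM -EFinD lee_fin.
have h1 : gamma * (G0 - 1) - k * (\sum_i `|y i 0 - x0 i 0|) <= gamma * Gy.
  have : gamma * (G0 - 1 - (\sum_i `|y i 0 - x0 i 0|) / r) <= gamma * Gy.
    by rewrite ler_pM2l.
  by rewrite /k mulrBr [gamma / r * _]mulrAC -mulrA.
have h2 : \sum_i (- k * `|u i 0 - x0 i 0| - k ^+ 2 / 2) <=
          \sum_i (- k * `|y i 0 - x0 i 0| + 2^-1 * (y i 0 - u i 0) ^+ 2).
  apply: ler_sum => i _.
  have k0 : 0 <= k by rewrite /k divr_ge0 // ltW.
  have t1 : `|y i 0 - x0 i 0| <= `|y i 0 - u i 0| + `|u i 0 - x0 i 0|.
    have -> : y i 0 - x0 i 0 = (y i 0 - u i 0) + (u i 0 - x0 i 0) by ring.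
    exact: ler_normD.
  have t2 : (y i 0 - u i 0) ^+ 2 = `|y i 0 - u i 0| ^+ 2 by rewrite real_normK // num_real.
  rewrite t2; set d := `|y i 0 - u i 0|; set e := `|u i 0 - x0 i 0|.
  set f := `|y i 0 - x0 i 0| in t1 *.
  have : 0 <= (d - k) ^+ 2 by apply: sqr_ge0.
  rewrite !expr2 => hsq.
  have : k * f <= k * (d + e) by rewrite ler_wpM2l.
  nra.
move: h2; rewrite !big_split /= -!mulr_sumr sumr_const.
have -> : dotv (y - u) (y - u) = \sum_i (y i 0 - u i 0) ^+ 2.
  by rewrite dotvvE; apply: eq_bigr => i _; rewrite !mxE.
rewrite card_ord => h2.
rewrite mulNr in h2.
rewrite mulNrn in h2.
lra.
Qed.
End EnvLB.


Section Main.
Variables (R : realType) (n : nat) (A M Q P : 'M[R]_n) (b c : 'cV[R]_n).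
Variables (alpha gamma : R) (g : 'cV[R]_n -> \bar R).
Hypothesis hA : A^T = A.
Hypothesis hApsd : forall x, 0 <= dotv (A *m x) x.
Hypothesis hMdef : M = 1%:M - gamma *: A.
Hypothesis hM : M^T = M.
Hypothesis hQ : Q^T = Q.
Hypothesis MQ : M *m Q = 1%:M.
Hypothesis QM : Q *m M = 1%:M.
Hypothesis hc : c = gamma *: (Q *m b).
Hypothesis hP : P = Q - 1%:M.
Hypothesis Mpsd : forall x, 0 <= dotv (M *m x) x.
Hypothesis gNy : forall x, g x != -oo%E.
Hypothesis gfin : exists x, g x != +oo%E.
Hypothesis glsc : lower_semicontinuous g.
Hypothesis gconv : convex_efun g.
Hypothesis gam0 : 0 < gamma.
Implicit Types (u x y : 'cV[R]_n).

Let psi := fun u : 'cV[R]_n =>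
    ((2^-1 * dotv (P *m u) u + dotv c u)%:E + gamma%:E * moreau_env gamma g u)%E.
Let phi := fun x : 'cV[R]_n =>
    ((2^-1 * dotv (A *m x) x + dotv b x + alpha)%:E + g x)%E.
Let qf y := 2^-1 * dotv (A *m y) y + dotv b y.
Let K0 := - (gamma / 2 * dotv c b) - gamma * alpha.
Let pen x y := dotv (M *m (x - y)) (x - y).

Lemma identK u y : 2^-1 * dotv (P *m u) u + dotv c u + 2^-1 * dotv (y - u) (y - u) =
  2^-1 * pen (Q *m u + c) y + gamma * (qf y + alpha) + K0.
Proof. rewrite (ident hMdef hM hQ MQ hc hP) /pen /qf /K0; ring. Qed.

Lemma psi_le u y Gy : g y = Gy%:E ->
  (psi u <= (2^-1 * pen (Q *m u + c) y + gamma * (qf y + alpha + Gy) + K0)%:E)%E.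
Proof.
move=> E; have := F1raw gNy gam0 (2^-1 * dotv (P *m u) u + dotv c u) u y.
rewrite E -EFinM -EFinD identK => h; apply: le_trans h _; rewrite lee_fin; lra.
Qed.

Lemma psi_ge u m :
  (forall y Gy, g y = Gy%:E ->
     m <= 2^-1 * pen (Q *m u + c) y + gamma * (qf y + alpha + Gy) + K0) ->
  (m%:E <= psi u)%E.
Proof.
move=> h; apply: (F2raw gNy gam0) => y.
have := gNy y; case E: (g y) => [Gy| |] // _; last first.
  by rewrite mulry gtr0_sg // mul1e addey // leey.
rewrite -EFinM -EFinD identK lee_fin; have := h _ _ E; lra.
Qed.

Lemma pen0 x : pen x x = 0.
Proof. by rewrite /pen subrr mulmx0 dotv0l. Qed.

Lemma pen_ge0 x y : 0 <= pen x y.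
Proof. exact: Mpsd. Qed.

Lemma QMc x : Q *m (M *m (x - c)) + c = x.
Proof. by rewrite mulmxA QM mul1mx subrK. Qed.

Lemma psi_at u x Gx : x = Q *m u + c -> g x = Gx%:E ->
  (psi u <= (gamma * (qf x + alpha + Gx) + K0)%:E)%E.
Proof.
move=> ex E; apply: le_trans (psi_le u E) _; rewrite -ex pen0 lee_fin; lra.
Qed.


Lemma phi_fin x : (forall x', (phi x <= phi x')%E) -> exists Gx, g x = Gx%:E.
Proof.
move=> hmin; have := gNy x; case E: (g x) => [Gx| |] // _; first by exists Gx.
case: gfin => x0; have := gNy x0; case E0: (g x0) => [G0| |] // _ _.
by have := hmin x0; rewrite /phi E E0 addey.
Qed.

Lemma dir1 xbar : (forall x, (phi xbar <= phi x)%E) ->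
  exists2 ubar, (forall u, (psi ubar <= psi u)%E) & xbar = Q *m ubar + c.
Proof.
move=> hmin; have [Gb Eb] := phi_fin hmin.
exists (M *m (xbar - c)); last by rewrite QMc.
move=> u; apply: le_trans (psi_at (esym (QMc xbar)) Eb) _.
apply: psi_ge => y Gy Ey.
have := hmin y; rewrite /phi Eb Ey -!EFinD lee_fin => h.
have := pen_ge0 (Q *m u + c) y.
have : gamma * (qf xbar + alpha + Gb) <= gamma * (qf y + alpha + Gy).
  by rewrite ler_pM2l // /qf.
lra.
Qed.


Lemma psi_fin u : exists Psi, psi u = Psi%:E.
Proof.
case: gfin => x0; have := gNy x0; case E0: (g x0) => [G0| |] // _ _.
have [m0 hm0] := env_lb gNy gam0 gconv glsc u E0.
set L := 2^-1 * dotv (P *m u) u + dotv c u.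
have lo : ((L + m0)%:E <= psi u)%E.
  apply: (F2raw gNy gam0) => y; have := hm0 y.
  move/(leeD2l L%:E); rewrite !EFinD addeA //.
have up := psi_le u E0.
move: lo up; case: (psi u) => [Psi| |] //; by exists Psi.
Qed.

Lemma psi_min_le ubar : (forall u, (psi ubar <= psi u)%E) ->
  forall y Gy, g y = Gy%:E -> (psi ubar <= (gamma * (qf y + alpha + Gy) + K0)%:E)%E.
Proof.
by move=> hmin y Gy Ey; apply: le_trans (hmin (M *m (y - c))) (psi_at (esym (QMc y)) Ey).
Qed.

Lemma qf_lb0 x w : qf x + dotv (A *m x + b) w <= qf (x + w).
Proof.
rewrite /qf mulmxDr !dotvDl !dotvDr (dotvMsym w x hA) (dotvC w (A *m x)).
have := hApsd w; lra.
Qed.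

Lemma qf_lb x y : qf x + dotv (A *m x + b) (y - x) <= qf y.
Proof. by have := qf_lb0 x (y - x); rewrite [x + _]addrC subrK. Qed.

Lemma dot_bound (v w : 'cV[R]_n) (r : R) : (forall i : 'I_n, `|w i 0| < r) ->
  `|dotv v w| <= (\sum_i `|v i 0|) * r.
Proof.
move=> hw; rewrite dotvE mulr_suml; apply: le_trans (ler_norm_sum _ _ _) _.
apply: ler_sum => i _; rewrite normrM ler_wpM2l //; exact: ltW.
Qed.

Lemma pen_lb x y (i : 'I_n) :
  ((x - y) i 0) ^+ 2 <= pen x y * dotv (M *m (Q *m delta_mx i 0)) (Q *m delta_mx i 0).
Proof.
have := CS (x - y) (Q *m delta_mx i 0) hM Mpsd.
by rewrite dotvM hM mulmxA MQ mul1mx dotv_delta.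
Qed.


Lemma cVB (u v : 'cV[R]_n) (i : 'I_n) : (u - v) i 0 = u i 0 - v i 0.
Proof. by rewrite !mxE. Qed.

Lemma dir2 ubar : (forall u, (psi ubar <= psi u)%E) ->
  forall x1, (phi (Q *m ubar + c) <= phi x1)%E.
Proof.
move=> hmin x1; set xb := Q *m ubar + c.
have [Psi ePsi] := psi_fin ubar.
have hle := psi_min_le hmin; rewrite ePsi in hle.
have := gNy x1; case E1: (g x1) => [G1| |] // _; last by rewrite /phi E1 addey // leey.
set R1 := qf x1 + alpha + G1.
have PsiR1 : Psi <= gamma * R1 + K0 by rewrite -lee_fin; exact: hle E1.
rewrite leNgt; apply/negP => hlt.
have [a' [R1a' ha']] : exists a', R1 < a' /\ ((a' - alpha - qf xb)%:E < g xb)%E.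
  move: hlt; rewrite /phi E1; have := gNy xb; case: (g xb) => [Gb| |] // _.
    rewrite -!EFinD lte_fin => h; exists ((R1 + (qf xb + alpha + Gb)) / 2).
    by rewrite lte_fin /R1 /qf; split; lra.
  by move=> _; exists (R1 + 1); split; [lra | rewrite ltey].
set a := (R1 + a') / 2; set dl := a' - a.
have dl0 : 0 < dl by rewrite /dl /a; lra.
have [V nV hV] := glsc ha'; have [r1 r10 hr1] := nbhs_cV nV.
set vv := A *m xb + b; set Nv := \sum_i `|vv i 0|.
have Nv0 : 0 <= Nv by apply: sumr_ge0 => i _; exact: normr_ge0.
set r := Num.min r1 (dl / (Nv + 1)).
have r0 : 0 < r by rewrite lt_min r10 divr_gt0 //; lra.
have rr1 : r <= r1 by rewrite ge_min lexx.
have rd : r <= dl / (Nv + 1) by rewrite ge_min lexx orbT.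
have Nvr : Nv * r <= dl.
  apply: le_trans (ler_wpM2l Nv0 rd) _.
  rewrite mulrA ler_pdivrMr; last by lra.
  nra.
pose D (i : 'I_n) := dotv (M *m (Q *m delta_mx i 0)) (Q *m delta_mx i 0).
set S := 1 + \sum_i D i.
have D0 i : 0 <= D i by apply: Mpsd.
have DS i : D i <= S.
  rewrite /S (bigD1 i) //= addrCA lerDl; apply: addr_ge0 => //.
  by apply: sumr_ge0 => j _.
have S0 : 0 < S.
  rewrite /S; have : 0 <= \sum_i D i by apply: sumr_ge0 => i _.
  lra.
set m := Num.min (gamma * a + K0) (Psi + 2^-1 * r ^+ 2 / S).
have key : (m%:E <= psi ubar)%E.
  apply: psi_ge => y Gy Ey.
  have hpen := pen_ge0 xb y.
  case: (pselect (forall i, `|xb i 0 - y i 0| < r)) => hin.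
    have := hV y (hr1 y (fun i => lt_le_trans (hin i) rr1)); rewrite Ey lte_fin => hg.
    have hq := qf_lb xb y.
    have hd : `|dotv vv (y - xb)| <= Nv * r.
      by apply: dot_bound => i; rewrite cVB distrC; exact: hin.
    move: hd; rewrite ler_norml => /andP[hd1 _].
    have : a <= qf y + alpha + Gy by rewrite /dl /vv in Nvr hd1 hq *; lra.
    rewrite -(ler_pM2l gam0) => h.
    have : m <= gamma * a + K0 by rewrite ge_min lexx.
    lra.
  move/existsNP: hin => [i /negP]; rewrite -leNgt => hi.
  have hp := pen_lb xb y i; rewrite cVB in hp.
  have r2 : r ^+ 2 <= (xb i 0 - y i 0) ^+ 2.
    rewrite -[X in _ <= X]real_normK ?num_real // !expr2; apply: ler_pM => //; exact: ltW.
  have hpS : r ^+ 2 <= pen xb y * S.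
    apply: le_trans r2 (le_trans hp _); exact: (ler_wpM2l hpen (DS i)).
  have : 2^-1 * r ^+ 2 / S <= 2^-1 * pen xb y.
    rewrite -mulrA ler_pM2l; first by rewrite ler_pdivrMr.
    by rewrite invr_gt0 ltr0n.
  have := hle y Gy Ey; rewrite lee_fin => hPsi.
  have : m <= Psi + 2^-1 * r ^+ 2 / S by rewrite ge_min lexx orbT.
  lra.
rewrite ePsi lee_fin in key.
have : Psi < m.
  rewrite lt_min; apply/andP; split.
    have : gamma * R1 < gamma * a by rewrite ltr_pM2l // /a; lra.
    lra.
  have : 0 < 2^-1 * r ^+ 2 / S.
    by rewrite divr_gt0 // mulr_gt0 // ?exprn_gt0 //; lra.
  lra.
lra.
Qed.


Lemma main_equiv xbar : is_minimizer phi xbar <->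
  exists2 ubar : 'cV[R]_n, is_minimizer psi ubar & xbar = Q *m ubar + c.
Proof.
split; first exact: dir1.
by move=> [ubar hmin ->]; exact: dir2.
Qed.

End Main.

End PilotAux.
Import PilotAux.

Theorem lemma5p8 (R : realType) (n : nat) (A : 'M[R]_n) (b : 'cV[R]_n) (alpha : R)
  (g : 'cV[R]_n -> \bar R) (gamma : R) :
  psdmx A ->
  proper_fun g -> lower_semicontinuous g -> convex_efun g ->
  0 < gamma ->
  pdmx (1%:M - gamma *: A) ->
  let Q := invmx (1%:M - gamma *: A) in
  let c := gamma *: (Q *m b) in
  let P := Q - 1%:M in
  let psi := fun u : 'cV[R]_n =>
    ((2^-1 * dotv (P *m u) u + dotv c u)%:E + gamma%:E * moreau_env gamma g u)%E in
  let phi := fun x : 'cV[R]_n =>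
    ((2^-1 * dotv (A *m x) x + dotv b x + alpha)%:E + g x)%E in
  forall xbar : 'cV[R]_n,
    is_minimizer phi xbar <->
    exists2 ubar : 'cV[R]_n, is_minimizer psi ubar & xbar = Q *m ubar + c.
Proof.
move=> [hA hApsd] [gNy gfin] hlsc hconv hgam hpd Q c P psi phi xbar.
have hMu := pd_unit hpd.
have hM : (1%:M - gamma *: A)^T = 1%:M - gamma *: A := hpd.1.
have hQ : Q^T = Q by rewrite /Q trmx_inv hM.
have MQ : (1%:M - gamma *: A) *m Q = 1%:M by apply: mulmxV.
have QM : Q *m (1%:M - gamma *: A) = 1%:M by apply: mulVmx.
exact: (main_equiv alpha hA hApsd erefl hM hQ MQ QM erefl erefl (psd_of_pd hpd)
  gNy gfin hlsc hconv hgam xbar).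
Qed.
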